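(* Let $n_1,n_2,n_3\in\mathbb{N}$, let $\sigma$ be a segment label map on $G=\{1,\dots,n_1\}\times\{1,\dots,n_2\}\times\{1,\dots,n_3\}$, fix any decomposition of $T$ into blocks, let $\tau=\mathrm{LABEL}(\sigma,T)$ and let $\tau'$ be the output of the block-wise method. Then for all 0-cells $t\in T$: $\tau(t)\neq0\Rightarrow\tau'(t)\neq0$.
   Context: Voxel grid and segmentation: $G=\{1,\dots,n_1\}\times\{1,\dots,n_2\}\times\{1,\dots,n_3\}$; voxels $v,w$ are adjacent iff $\sum_i|v_i-w_i|=1$. A segment label map is $\sigma:G\to\mathbb{N}=\{1,2,\dots\}$ such that each level set $\sigma^{-1}(l)$ is connected w.r.t. this adjacency. Topological grid: $T=\{1,\dots,2n_1-1\}\times\{1,\dots,2n_2-1\}\times\{1,\dots,2n_3-1\}$; a cell with exactly $j$ odd coordinates is a $j$-cell. Voxel $r$ corresponds to the 3-cell $2r-1$. Two cells are 6-neighbors if they differ by $1$ in exactly one coordinate. For a $j$-cell $t$, $\Gamma(t)$ is the set of 6-neighbors of $t$ in $T$ that are $(j+1)$-cells. Cells $t_1,t_2$ are connected, $t_1\leftrightarrow t_2$, iff there is $t\in T$ with $t_1,t_2\in\Gamma(t)$. Procedure LABEL: for a voxel box $\prod_i\{a_i,\dots,b_i\}\subseteq G$ let $B=\prod_i\{2a_i-1,\dots,2b_i-1\}$ be its cell box. $\mathrm{LABEL}(\sigma,B)$ produces $\lambda:B\to\mathbb{N}_0$: (1) $\lambda(2r-1)=\sigma(r)$ for 3-cells.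 (2) For $j=2,1,0$ in this order: for each $j$-cell $t\in B$ let $\theta(t)$ be the set of positive integers occurring exactly once in $(\lambda(s))_{s\in\Gamma(t)}$; $t$ is active iff $\theta(t)\ne\emptyset$, inactive $j$-cells get label $0$; the active $j$-cells of $B$ are partitioned into maximal sets of cells with equal $\theta$ that are connected by $\leftrightarrow$-paths inside the set; these classes are numbered $1,\dots,m_j(B)$ arbitrarily and each active $j$-cell gets its class number. Reference labeling: $\tau=\mathrm{LABEL}(\sigma,T)$. Block-wise method: for each axis $i$ choose odd integers $1=a^i_0<\dots<a^i_{m_i}=2n_i-1$; blocks are the boxes $\prod_i\{a^i_{k_i-1},\dots,a^i_{k_i}\}$. Step 1: $\lambda_B=\mathrm{LABEL}(\sigma,B)$ for each block. Step 2: with blocks ordered $B_1,\dots,B_K$, add offset $\sum_{k'<k}m_j(B_{k'})$ to each positive $j$-cell label of $\lambda_{B_k}$ ($j\in\{0,1,2\}$). Step 3: for $j\in\{1,2\}$, via union–find, unite the labels received in different blocks by any active $j$-cell lying in several blocks, and replace every positive $j$-cell label by its set representative. Step 4: for each 0-cell $t_0$ and each pair of distinct 1-cell labels occurring exactly once among the current labels of $\Gamma(t_0)$, merge the two labels if the corresponding 1-cells bound the same set of current 2-cell labels; if any merge took place at $t_0$, recompute the activity of $t_0$ and set its label to $0$ if inactive. The result is $\tau':T\to\mathbb{N}_0$. *)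

(* Defs.v *)
From Stdlib Require Import Relations.
From mathcomp Require Import all_boot.
Set Implicit Arguments. Unset Strict Implicit. Unset Printing Implicit Defensive.

(* A point of Z^3 with natural coordinates; used both for voxels r in G
   and for cells t in the topological grid T. *)
Definition cell := (nat * nat * nat)%type.
Definition cx (t : cell) : nat := t.1.1.
Definition cy (t : cell) : nat := t.1.2.
Definition cz (t : cell) : nat := t.2.

Definition absdiff (a b : nat) : nat := (a - b) + (b - a).

Definition adj (v w : cell) : bool :=
  absdiff (cx v) (cx w) + absdiff (cy v) (cy w) + absdiff (cz v) (cz w) == 1.

(* a cell with exactly j odd coordinates is a j-cell *)
Definition cdim (t : cell) : nat := odd (cx t) + odd (cy t) + odd (cz t).

Definition in_G (n1 n2 n3 : nat) (r : cell) : bool :=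
  [&& 1 <= cx r <= n1, 1 <= cy r <= n2 & 1 <= cz r <= n3].

Definition segment_label_map (n1 n2 n3 : nat) (sigma : cell -> nat) : Prop :=
  (forall r, in_G n1 n2 n3 r -> 0 < sigma r) /\
  (forall r r', in_G n1 n2 n3 r -> in_G n1 n2 n3 r' -> sigma r = sigma r' ->
     clos_refl_trans cell
       (fun a b => [/\ in_G n1 n2 n3 a, in_G n1 n2 n3 b,
                       sigma a = sigma r, sigma b = sigma r & adj a b]) r r').

Definition box := (cell * cell)%type.
Definition in_box (B : box) (t : cell) : bool :=
  [&& cx B.1 <= cx t <= cx B.2, cy B.1 <= cy t <= cy B.2 & cz B.1 <= cz t <= cz B.2].

Definition Tbox (n1 n2 n3 : nat) : box :=
  ((1, 1, 1), ((2 * n1).-1, (2 * n2).-1, (2 * n3).-1)).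
Definition in_T (n1 n2 n3 : nat) (t : cell) : bool := in_box (Tbox n1 n2 n3) t.

Definition Gamma (n1 n2 n3 : nat) (t s : cell) : Prop :=
  [/\ in_T n1 n2 n3 s, cdim s = (cdim t).+1 & adj t s].

Definition cconnected (n1 n2 n3 : nat) (t1 t2 : cell) : Prop :=
  exists t, [/\ in_T n1 n2 n3 t, Gamma n1 n2 n3 t t1 & Gamma n1 n2 n3 t t2].

(* the voxel r whose 3-cell is 2r-1 *)
Definition voxel_of (t : cell) : cell :=
  ((cx t).+1./2, (cy t).+1./2, (cz t).+1./2).

(* Procedure LABEL(sigma, B), specified relationally: since the class *)
(* numbering is arbitrary, LABEL_spec holds for every admissible      *)
(* output lambda (restricted to B) together with the class counts m j *)
Section Label.
Variables (n1 n2 n3 : nat) (B : box) (lam : cell -> nat).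

Definition occurs_once (t : cell) (l : nat) : Prop :=
  exists s, [/\ Gamma n1 n2 n3 t s, in_box B s, lam s = l &
    forall s', Gamma n1 n2 n3 t s' -> in_box B s' -> lam s' = l -> s' = s].

Definition theta (t : cell) (l : nat) : Prop := 0 < l /\ occurs_once t l.
Definition active (t : cell) : Prop := exists l, theta t l.
Definition same_theta (t t' : cell) : Prop := forall l, theta t l <-> theta t' l.

Definition class_step (j : nat) (a b : cell) : Prop :=
  in_box B a /\ in_box B b /\ cdim a = j /\ cdim b = j /\
  active a /\ active b /\ same_theta a b /\ cconnected n1 n2 n3 a b.

End Label.

Definition LABEL_spec (n1 n2 n3 : nat) (sigma : cell -> nat) (B : box)
    (lam : cell -> nat) (m : nat -> nat) : Prop :=
  (forall t, in_box B t -> cdim t = 3 -> lam t = sigma (voxel_of t)) /\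
  (forall j, j < 3 ->
     [/\ (forall t, in_box B t -> cdim t = j ->
            ~ active n1 n2 n3 B lam t -> lam t = 0),
         (forall t, in_box B t -> cdim t = j ->
            active n1 n2 n3 B lam t -> 1 <= lam t <= m j),
         (forall k, 1 <= k <= m j -> exists t,
            [/\ in_box B t, cdim t = j, active n1 n2 n3 B lam t & lam t = k]) &
         (forall t t', in_box B t -> in_box B t' -> cdim t = j -> cdim t' = j ->
            active n1 n2 n3 B lam t -> active n1 n2 n3 B lam t' ->
            (lam t = lam t' <->
               clos_refl_trans cell (class_step n1 n2 n3 B lam j) t t'))]).

Definition valid_breaks (nn : nat) (a : seq nat) : Prop :=
  [/\ head 0 a = 1, last 0 a = (2 * nn).-1, sorted ltn a & all odd a].

Definition intervals (a : seq nat) : seq (nat * nat) := zip a (behead a).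

Definition blocks (a1 a2 a3 : seq nat) : seq box :=
  flatten [seq flatten [seq [seq ((i.1, j.1, k.1), (i.2, j.2, k.2))
                              | k <- intervals a3]
                         | j <- intervals a2]
           | i <- intervals a1].

Definition box0 : box := ((0, 0, 0), (0, 0, 0)).

(* Step 4 (sequential over the 0-cells in the order ord).              *)
(* c3 : current labels after step 3; E : current union-find            *)
(* equivalence on 1-cell labels; lab : current 0-cell labels.          *)
Section Step4.
Variables (n1 n2 n3 : nat) (c3 : cell -> nat).

Definition once1 (E : nat -> nat -> Prop) (t0 s : cell) : Prop :=
  [/\ Gamma n1 n2 n3 t0 s, 0 < c3 s &
      forall s', Gamma n1 n2 n3 t0 s' -> 0 < c3 s' -> E (c3 s) (c3 s') -> s' = s].

Definition bound2 (s : cell) (l : nat) : Prop :=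
  exists u, [/\ Gamma n1 n2 n3 s u, 0 < c3 u & c3 u = l].

Definition mergepair (E : nat -> nat -> Prop) (t0 : cell) (a b : nat) : Prop :=
  exists s s', once1 E t0 s /\ once1 E t0 s' /\ ~ E (c3 s) (c3 s') /\
               a = c3 s /\ b = c3 s' /\ (forall l, bound2 s l <-> bound2 s' l).

Definition merged (E : nat -> nat -> Prop) (t0 : cell) : Prop :=
  exists a b, mergepair E t0 a b.

Definition Enext (E : nat -> nat -> Prop) (t0 : cell) : nat -> nat -> Prop :=
  clos_refl_sym_trans nat (fun a b => E a b \/ mergepair E t0 a b).

Definition active0 (E : nat -> nat -> Prop) (t0 : cell) : Prop :=
  exists s, once1 E t0 s.

Inductive step4 : (nat -> nat -> Prop) -> (cell -> nat) -> seq cell -> (cell -> nat) -> Prop :=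
| Step4Nil E lab : step4 E lab [::] lab
| Step4Cons E lab t0 ord v lab' :
    (merged E t0 -> active0 (Enext E t0) t0 -> v = lab t0) ->
    (merged E t0 -> ~ active0 (Enext E t0) t0 -> v = 0) ->
    (~ merged E t0 -> v = lab t0) ->
    step4 (Enext E t0) (fun t => if t == t0 then v else lab t) ord lab' ->
    step4 E lab (t0 :: ord) lab'.

End Step4.

(* The block-wise method: tau' is a possible output for the            *)
(* breakpoints a1 a2 a3 (all arbitrary choices quantified).           *)
Definition blockwise_output (n1 n2 n3 : nat) (sigma : cell -> nat)
    (a1 a2 a3 : seq nat) (tau' : cell -> nat) : Prop :=
  exists (bl : seq box) (lams : nat -> cell -> nat) (ms : nat -> nat -> nat)
         (rep : nat -> nat -> nat) (blk : cell -> nat) (ord : seq cell),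
  let K := size bl in
  (* Step 2: offset labels received by cell t in block k *)
  let off k j := \sum_(0 <= i < k) ms i j in
  let L k t := if 0 < lams k t then off k (cdim t) + lams k t else 0 in
  (* Step 3: union-find equivalence on j-cell labels *)
  let unite j a b := exists t k k',
      cdim t = j /\ k < K /\ k' < K /\ in_box (nth box0 bl k) t /\
      in_box (nth box0 bl k') t /\ 0 < lams k t /\ 0 < lams k' t /\
      a = L k t /\ b = L k' t in
  let E j := clos_refl_sym_trans nat (unite j) in
  let c3 t := let v := L (blk t) t in
              if (cdim t == 1) || (cdim t == 2) then
                (if v == 0 then 0 else rep (cdim t) v) else v in
      perm_eq bl (blocks a1 a2 a3) /\
      (forall k, k < K -> LABEL_spec n1 n2 n3 sigma (nth box0 bl k) (lams k) (ms k)) /\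
      (forall j l, (j == 1) || (j == 2) -> 0 < l ->
         E j l (rep j l) /\ forall l', 0 < l' -> E j l l' -> rep j l = rep j l') /\
      (* a cell lying in several blocks takes its label from one of them *)
      (forall t, in_T n1 n2 n3 t -> cdim t < 3 ->
         blk t < K /\ in_box (nth box0 bl (blk t)) t) /\
      uniq ord /\ (forall t, t \in ord = in_T n1 n2 n3 t && (cdim t == 0)) /\
      step4 n1 n2 n3 c3 eq c3 ord tau'.

(* Main.v *)
Require Import Defs.
From Stdlib Require Import Relations Classical Setoid.
From mathcomp Require Import all_boot.
Set Implicit Arguments. Unset Strict Implicit. Unset Printing Implicit Defensive.

Definition get (i : nat) (t : cell) : nat :=
  if i == 0 then cx t else if i == 1 then cy t else cz t.
Definition upd (i : nat) (t : cell) (v : nat) : cell :=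
  if i == 0 then (v, cy t, cz t) else if i == 1 then (cx t, v, cz t) else (cx t, cy t, v).

Lemma get_upd i j t v : i < 3 -> j < 3 ->
  get i (upd j t v) = if i == j then v else get i t.
Proof. by case: i => [|[|[|]]] //; case: j => [|[|[|]]]. Qed.

Lemma cell_ext t t' : (forall i, i < 3 -> get i t = get i t') -> t = t'.
Proof.
case: t => [[x y] z]; case: t' => [[x' y'] z'] H.
by move: (H 0 erefl) (H 1 erefl) (H 2 erefl); rewrite /get /cx /cy /cz /= => -> -> ->.
Qed.

Lemma cdimE t : cdim t = odd (get 0 t) + odd (get 1 t) + odd (get 2 t).
Proof. by []. Qed.

Lemma oddE x : x = odd x + 2 * x./2.
Proof. by rewrite mulnC muln2 odd_double_half. Qed.

Lemma absdiff0 a b : absdiff a b = 0 -> b = a.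
Proof.
rewrite /absdiff => /eqP; rewrite addn_eq0 !subn_eq0 => /andP[h1 h2].
by apply/eqP; rewrite eqn_leq h1 h2.
Qed.

Lemma sub1E a b : a - b = 1 -> a = b.+1.
Proof.
move=> e; have hb : b <= a by apply: ltnW; rewrite ltnNge -subn_eq0 e.
by rewrite -{1}(subnK hb) e add1n.
Qed.

Lemma absdiff1 a b : absdiff a b = 1 -> b = a.+1 \/ b.+1 = a.
Proof.
rewrite /absdiff => /eqP; rewrite addn_eq1 => /orP [/andP [/eqP h1 _]|/andP [_ /eqP h2]].
- by right; rewrite (sub1E h1).
- by left; rewrite (sub1E h2).
Qed.

Lemma absdiff_nn x : absdiff x x = 0.
Proof. by rewrite /absdiff subnn. Qed.

Lemma absdiff_S x : absdiff x x.+1 = 1.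
Proof.
rewrite /absdiff subSnn; have -> : x - x.+1 = 0 by apply/eqP; rewrite subn_eq0 leqnSn.
by [].
Qed.

Lemma absdiff_P x : 0 < x -> absdiff x x.-1 = 1.
Proof.
case: x => // x _ /=; rewrite /absdiff subSnn; have -> : x - x.+1 = 0 by apply/eqP; rewrite subn_eq0 leqnSn.
by [].
Qed.

Lemma GammaE n1 n2 n3 t s : Gamma n1 n2 n3 t s ->
  in_T n1 n2 n3 s /\ exists i, [/\ i < 3, ~~ odd (get i t) &
    (s = upd i t (get i t).+1 \/ (0 < get i t /\ s = upd i t (get i t).-1))].
Proof.
case: t => [[x y] z]; case: s => [[x' y'] z'].
rewrite /Gamma /adj /cdim /cx /cy /cz /=.
case=> hT hd /eqP ha; split=> //.
have ad0 := absdiff0; have ad1 := absdiff1.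
move: ha.
move: (absdiff x x') (absdiff y y') (absdiff z z') (ad0 x x') (ad0 y y') (ad0 z z') (ad1 x x') (ad1 y y') (ad1 z z').
move=> p q r a0 b0 c0 a1 b1 c1 ha.
have : (p = 1 /\ q = 0 /\ r = 0) \/ (q = 1 /\ p = 0 /\ r = 0) \/ (r = 1 /\ p = 0 /\ q = 0).
  move/eqP: ha; rewrite addn_eq1 addn_eq1 addn_eq0.
  case/orP => [/andP [/orP [/andP [/eqP hp /eqP hq]|/andP [/eqP hp /eqP hq]] /eqP hr]|/andP [/andP [/eqP hp /eqP hq] /eqP hr]].
  - by left.
  - by right; left.
  - by right; right.
case=> [[/a1 h1 [/b0 h2 /c0 h3]]|[[/b1 h1 [/a0 h2 /c0 h3]]|[/c1 h1 [/a0 h2 /b0 h3]]]].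
- subst y' z'; case: h1 => h1; subst; exists 0; rewrite /get /upd /cx /cy /cz /=; move: hd; rewrite /= ?negbK.
  + by case: (odd x) => //; case: (odd y); case: (odd z) => //= _; split => //; left.
  + by case: (odd x') => //; case: (odd y); case: (odd z) => //= _; split => //; right.
- subst x' z'; case: h1 => h1; subst; exists 1; rewrite /get /upd /cx /cy /cz /=; move: hd; rewrite /= ?negbK.
  + by case: (odd y) => //; case: (odd x); case: (odd z) => //= _; split => //; left.
  + by case: (odd y') => //; case: (odd x); case: (odd z) => //= _; split => //; right.
- subst x' y'; case: h1 => h1; subst; exists 2; rewrite /get /upd /cx /cy /cz /=; move: hd; rewrite /= ?negbK.
  + by case: (odd z) => //; case: (odd x); case: (odd y) => //= _; split => //; left.
  + by case: (odd z') => //; case: (odd x); case: (odd y) => //= _; split => //; right.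
Qed.

Lemma even_lt x lo hi : odd lo -> odd hi -> ~~ odd x -> lo <= x <= hi -> lo < x < hi.
Proof.
move=> hl hh hx /andP[h1 h2]; apply/andP; split.
- rewrite ltn_neqAle h1 andbT; apply/eqP=> e; by rewrite -e hl in hx.
- rewrite ltn_neqAle h2 andbT; apply/eqP=> e; by rewrite e hh in hx.
Qed.

Lemma in_boxP B t : in_box B t <->
  [/\ cx B.1 <= cx t <= cx B.2, cy B.1 <= cy t <= cy B.2 & cz B.1 <= cz t <= cz B.2].
Proof. by rewrite /in_box; split => [/and3P|/and3P]. Qed.

Lemma in_boxP' B t : in_box B t <->
  [/\ cx B.1 <= cx t /\ cx t <= cx B.2, cy B.1 <= cy t /\ cy t <= cy B.2 &
      cz B.1 <= cz t /\ cz t <= cz B.2].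
Proof.
rewrite in_boxP; split=> [[/andP ? /andP ? /andP ?]|[[-> ->] [-> ->] [-> ->]]] //.
Qed.

Lemma pos_of x n : 1 <= x -> x <= (2 * n).-1 -> 0 < n.
Proof.
move=> h1 h2; rewrite lt0n; apply/negP => /eqP e; subst n.
by move: (leq_trans h1 h2); rewrite muln0.
Qed.

Lemma inT_odd n1 n2 n3 t : in_T n1 n2 n3 t ->
  [/\ 0 < n1, 0 < n2 & 0 < n3].
Proof.
case/in_boxP'; rewrite /Tbox /cx /cy /cz /= => [[h1 h2] [h3 h4] [h5 h6]].
by split; [apply: pos_of h2|apply: pos_of h4|apply: pos_of h6].
Qed.

Lemma evenP x : ~~ odd x -> exists h, x = 2 * h.
Proof. by move=> hx; exists x./2; rewrite {1}(oddE x) (negbTE hx). Qed.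

Lemma in_box_get B t : in_box B t <-> forall i, i < 3 -> get i B.1 <= get i t <= get i B.2.
Proof.
rewrite in_boxP; split.
- by case=> h0 h1 h2 [|[|[|]]].
- by move=> H; split; [apply: (H 0)|apply: (H 1)|apply: (H 2)].
Qed.

Definition odd_box (B : box) : Prop := forall i, i < 3 -> odd (get i B.1) /\ odd (get i B.2).

Lemma Tbox_odd n1 n2 n3 : 0 < n1 -> 0 < n2 -> 0 < n3 -> odd_box (Tbox n1 n2 n3).
Proof.
move=> p1 p2 p3.
have o h : 0 < h -> odd (2 * h).-1 by move=> hh; rewrite -subn1 oddB ?muln_gt0 // oddM.
by case=> [|[|[|]]] //= _; rewrite /get /=; split => //; apply: o.
Qed.

Lemma around lo x hi : lo < x < hi -> (lo <= x.+1 <= hi) && (lo <= x.-1 <= hi).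
Proof.
case/andP => h1 h2; case: x h1 h2 => // x h1 h2 /=.
rewrite h2 (leq_trans (ltnW h1) (leqnSn _)) /= -ltnS h1 /=.
by apply: leq_trans (ltnW h2); apply: leqnSn.
Qed.

Lemma upd_get_ne i j t v : i < 3 -> j < 3 -> j != i -> get j (upd i t v) = get j t.
Proof. by move=> hi hj ne; rewrite get_upd // (negbTE ne). Qed.

Lemma cdim_upd i t v : i < 3 -> ~~ odd (get i t) -> odd v -> cdim (upd i t v) = (cdim t).+1.
Proof.
move=> hi he hv; rewrite !cdimE.
case: i hi he hv => [|[|[|]]] // _; rewrite !get_upd //= => /negbTE -> ->;
  by case: (odd (get _ t)); case: (odd (get _ t)).
Qed.

Lemma adj_upd i t v : i < 3 -> absdiff (get i t) v = 1 -> adj t (upd i t v).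
Proof.
move=> hi h; rewrite /adj.
case: i hi h => [|[|[|]]] // _; rewrite /get /upd /cx /cy /cz /= => h;
  by rewrite !absdiff_nn h.
Qed.

Lemma GammaI n1 n2 n3 t s i : in_T n1 n2 n3 t -> i < 3 -> ~~ odd (get i t) ->
  (s = upd i t (get i t).+1 \/ s = upd i t (get i t).-1) -> Gamma n1 n2 n3 t s.
Proof.
move=> hT hi hev hs.
have [p1 p2 p3] := inT_odd hT.
have [o1 o2] := Tbox_odd p1 p2 p3 hi.
have hb := (proj1 (in_box_get _ _) hT).
have /andP [ar1 ar2] := around (even_lt o1 o2 hev (hb i hi)).
have gp : 0 < get i t.
  case/andP: (hb i hi) => h _; apply: leq_trans h; by move: o1; case: (get i _).
have od : odd (get i t).-1 by move: hev; case: (get i t) gp => // x _ /=; rewrite negbK.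
case: hs => ->; split.
- apply/in_box_get => j hj; rewrite get_upd //; case: eqP => [->|_] //; exact: hb.
- by apply: cdim_upd => //; rewrite /= hev.
- exact: adj_upd (absdiff_S _).
- apply/in_box_get => j hj; rewrite get_upd //; case: eqP => [->|_] //; exact: hb.
- exact: cdim_upd.
- exact: adj_upd (absdiff_P gp).
Qed.

Lemma succ_pred x : 0 < x -> x.+1 <> x.-1.
Proof. case: x => // x _ /=; by elim: x => // x IH [/IH]. Qed.

Lemma box_closed n1 n2 n3 B t s : odd_box B -> in_box B t -> Gamma n1 n2 n3 t s -> in_box B s.
Proof.
move=> hB /in_box_get ht /GammaE [_ [i [hi hev hs]]].
apply/in_box_get => j hj.
have [o1 o2] := hB j hj.
have := ht j hj.
have E : get j s = if j == i then (if s == upd i t (get i t).+1 then (get i t).+1 else (get i t).-1) else get j t.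
  case: hs => [->|[p ->]]; rewrite get_upd // ?eqxx //.
  case: eqP => // e; subst; rewrite ifF //; apply/negP => /eqP /(congr1 (get i)).
  by rewrite !get_upd // eqxx => /esym; apply: succ_pred.
rewrite E; case: eqP => [e|_] //; subst j.
have /andP [h1 h2] := around (even_lt o1 o2 hev (ht i hi)).
by case: eqP.
Qed.

Lemma mem_zip2 (T1 T2 : eqType) (s : seq T1) (t : seq T2) x y :
  (x, y) \in zip s t -> x \in s /\ y \in t.
Proof.
elim: s t => [|a s IH] [|b t] //=; rewrite in_cons => /orP [/eqP [-> ->]|/IH [h1 h2]].
- by rewrite !in_cons !eqxx.
- by rewrite !in_cons h1 h2 !orbT.
Qed.

Lemma intervals_odd a p : all odd a -> p \in intervals a -> odd p.1 /\ odd p.2.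
Proof.
case: p => x y /allP ha /mem_zip2 [h1 /mem_behead h2]; split; exact: ha.
Qed.

Lemma blocks_odd a1 a2 a3 B : all odd a1 -> all odd a2 -> all odd a3 ->
  B \in blocks a1 a2 a3 -> odd_box B.
Proof.
move=> h1 h2 h3 /flatten_mapP [i hi /flatten_mapP [j hj /mapP [k hk ->]]].
have [? ?] := intervals_odd h1 hi; have [? ?] := intervals_odd h2 hj;
have [? ?] := intervals_odd h3 hk.
by case=> [|[|[|]]].
Qed.

Definition PT (a b l : nat) : Prop := 0 < l /\ ((a = l /\ b <> l) \/ (b = l /\ a <> l)).
Definition SS (a b c d : nat) : Prop := a <> b /\ ((a = c /\ b = d) \/ (a = d /\ b = c)).

Lemma ptS a b c d : 0 < a -> 0 < b -> 0 < c -> 0 < d ->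
  (forall l, PT a b l <-> PT c d l) -> a <> b -> SS a b c d.
Proof.
rewrite /PT /SS => pa pb pc pd H ne; split=> //.
have [_ ha] := proj1 (H a) (conj pa (or_introl (conj erefl (fun e => ne (esym e))))).
have [_ hb] := proj1 (H b) (conj pb (or_intror (conj erefl ne))).
case: ha => [[e1 n1]|[e1 n1]]; case: hb => [[e2 n2]|[e2 n2]]; subst.
- by case: ne.
- by left.
- by right.
- by case: ne.
Qed.

Lemma Sptt a b c d : SS a b c d -> (forall l, PT a b l <-> PT c d l).
Proof.
rewrite /PT /SS => -[ne [[-> ->]|[-> ->]]] l //.
by split=> -[lp h]; split=> //; case: h => h; [right|left|right|left].
Qed.

Definition PAf (A B C D i : nat) := if i == 0 then A else if i == 1 then A else if i == 2 then B else D.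
Definition PBf (A B C D i : nat) := if i == 0 then D else if i == 1 then B else C.

Lemma cyc4 A B C D i i' i0 :
  let S i i' := SS (PAf A B C D i) (PBf A B C D i) (PAf A B C D i') (PBf A B C D i') in
  i < 4 -> i' < 4 -> i0 < 4 -> i <> i' -> S i i' ->
  PAf A B C D i0 <> PBf A B C D i0 -> exists2 i1, i1 < 4 & i1 <> i0 /\ S i0 i1.
Proof.
move=> S hi hi' hi0 ne hS ne0.
have H : A = C \/ B = D \/ (A = B /\ C = D) \/ (A = D /\ B = C).
  move: hS; rewrite /S /SS.
  case: i i' hi hi' ne => [|[|[|[|]]]] [|[|[|[|]]]] //= _ _ _; rewrite /PAf /PBf /=;
  move=> [n [[e1 e2]|[e1 e2]]]; subst;
  first [by left | by right; left | by right; right; left | by right; right; right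
        | by exfalso; apply: n].
move: ne0; rewrite /S /SS.
case: H => [e|[e|[[e1 e2]|[e1 e2]]]]; subst;
case: i0 hi0 => [|[|[|[|]]]] // _; rewrite /PAf /PBf /= => n.
all: first [ by exfalso; apply: n
  | by exists 0; split=> //; split=> //; (left + right)
  | by exists 1; split=> //; split=> //; (left + right)
  | by exists 2; split=> //; split=> //; (left + right)
  | by exists 3; split=> //; split=> //; (left + right) ].
Qed.

Section Lab.
Variables (n1 n2 n3 : nat) (sigma : cell -> nat).

Local Notation Gam := (Gamma n1 n2 n3).
Local Notation inT := (in_T n1 n2 n3).

Lemma lab_pos B lam m t : LABEL_spec n1 n2 n3 sigma B lam m -> in_box B t -> cdim t < 3 ->
  (0 < lam t <-> active n1 n2 n3 B lam t).
Proof.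
move=> [_ H] hb hc; have [h0 h1 _ _] := H _ hc; split.
- move=> hp; apply: NNPP => na; by rewrite (h0 t hb erefl na) in hp.
- by move=> ha; have /andP[] := h1 t hb erefl ha.
Qed.

Lemma lab_eq B lam m t t' : LABEL_spec n1 n2 n3 sigma B lam m -> in_box B t -> in_box B t' ->
  cdim t < 3 -> cdim t' = cdim t -> 0 < lam t -> 0 < lam t' ->
  (lam t = lam t' <-> clos_refl_trans cell (class_step n1 n2 n3 B lam (cdim t)) t t').
Proof.
move=> hL hb hb' hc hc' p p'.
have [_ H] := hL; have [_ _ _ h3] := H _ hc.
apply: h3 => //; [exact/(lab_pos hL)| apply/(lab_pos hL) => //; by rewrite hc'].
Qed.

Lemma crt_ends B lam j a b : clos_refl_trans cell (class_step n1 n2 n3 B lam j) a b ->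
  a = b \/ [/\ in_box B a, in_box B b, cdim a = j, cdim b = j &
             active n1 n2 n3 B lam a /\ active n1 n2 n3 B lam b].
Proof.
elim=> [x y [? [? [? [? [? [? _]]]]]]|x|x y z _ [->|[? ? ? ? [? ?]]] _ [<-|[? ? ? ? [? ?]]]];
  by [right|left|].
Qed.

Lemma crt_same_theta B lam j a b : clos_refl_trans cell (class_step n1 n2 n3 B lam j) a b ->
  same_theta n1 n2 n3 B lam a b.
Proof.
elim=> [x y [_ [_ [_ [_ [_ [_ [h _]]]]]]]|x l|x y z _ h1 _ h2 l] //.
by rewrite h1 h2.
Qed.

Lemma crt_map B lam j B' lam' j' a b :
  (forall x y, class_step n1 n2 n3 B lam j x y -> class_step n1 n2 n3 B' lam' j' x y) ->
  clos_refl_trans cell (class_step n1 n2 n3 B lam j) a b ->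
  clos_refl_trans cell (class_step n1 n2 n3 B' lam' j') a b.
Proof.
move=> H; elim=> [x y /H|x|x y z _ h1 _ h2]; [exact: rt_step|exact: rt_refl|exact: rt_trans h2].
Qed.

Lemma cconn_T a b : cconnected n1 n2 n3 a b -> inT a /\ inT b.
Proof. by case=> t [_ [? _ _] [? _ _]]. Qed.

Lemma theta_transfer B lam B' lam' u l :
  (forall v, Gam u v -> [/\ in_box B v, in_box B' v & lam v = lam' v]) ->
  theta n1 n2 n3 B lam u l <-> theta n1 n2 n3 B' lam' u l.
Proof.
move=> H; split=> -[lp [v [hv hb hl hu]]]; split=> //; exists v; have [? ? e] := H v hv.
- split=> //; first by rewrite -e.
  move=> v' hv' _ e'; have [? ? e''] := H v' hv'; apply: hu => //; by rewrite e''.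
- split=> //; first by rewrite e.
  move=> v' hv' _ e'; have [? ? e''] := H v' hv'; apply: hu => //; by rewrite -e''.
Qed.

End Lab.

Section Blk.
Variables (n1 n2 n3 : nat) (sigma tau : cell -> nat) (mT : nat -> nat).
Variables (B : box) (lam : cell -> nat) (m : nat -> nat).
Hypothesis Htau : LABEL_spec n1 n2 n3 sigma (Tbox n1 n2 n3) tau mT.
Hypothesis Hlam : LABEL_spec n1 n2 n3 sigma B lam m.
Hypothesis HB : odd_box B.

Local Notation Gam := (Gamma n1 n2 n3).
Local Notation inT := (in_T n1 n2 n3).
Local Notation TB := (Tbox n1 n2 n3).

Lemma agree3 u v : cdim u = 2 -> in_box B u -> Gam u v ->
  [/\ in_box B v, in_box TB v & lam v = tau v].
Proof.
move=> hc hb hv; have hbv := box_closed HB hb hv.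
case: (hv) => hT hcv _; split=> //.
rewrite hc in hcv; rewrite (proj1 Hlam v hbv hcv) (proj1 Htau v hT hcv) //.
Qed.

Lemma th2 u l : cdim u = 2 -> in_box B u ->
  theta n1 n2 n3 B lam u l <-> theta n1 n2 n3 TB tau u l.
Proof. by move=> hc hb; apply: theta_transfer => v; apply: agree3. Qed.

Lemma act2 u : cdim u = 2 -> in_box B u ->
  active n1 n2 n3 B lam u <-> active n1 n2 n3 TB tau u.
Proof. by move=> hc hb; split=> -[l hl]; exists l; move: hl; rewrite th2. Qed.

Lemma step2 a b : class_step n1 n2 n3 B lam 2 a b -> class_step n1 n2 n3 TB tau 2 a b.
Proof.
case=> ha [hb [ca [cb [aa [ab [st cc]]]]]].
have [ta tb] := cconn_T cc.
refine (conj ta (conj tb (conj ca (conj cb (conj _ (conj _ (conj _ cc))))))).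
- by rewrite -act2.
- by rewrite -act2.
move=> l; rewrite -th2 // -th2 //; exact: st.
Qed.

Lemma step2' a b : in_box B a -> in_box B b ->
  class_step n1 n2 n3 TB tau 2 a b -> class_step n1 n2 n3 B lam 2 a b.
Proof.
move=> ha hb [_ [_ [ca [cb [aa [ab [st cc]]]]]]].
refine (conj ha (conj hb (conj ca (conj cb (conj _ (conj _ (conj _ cc))))))).
- by rewrite act2.
- by rewrite act2.
move=> l; rewrite th2 // th2 //; exact: st.
Qed.

Lemma R2 u : cdim u = 2 -> in_box B u -> inT u -> (0 < lam u <-> 0 < tau u).
Proof.
move=> hc hb hT.
rewrite (lab_pos Hlam hb) ?hc // (lab_pos Htau hT) ?hc //; exact: act2.
Qed.

Lemma P2 a b : cdim a = 2 -> cdim b = 2 -> in_box B a -> in_box B b ->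
  lam a = lam b -> 0 < lam a -> tau a = tau b.
Proof.
move=> ca cb ha hb e p.
have := (lab_eq Hlam ha hb (_ : cdim a < 3) (_ : cdim b = cdim a) p (_ : 0 < lam b)).
rewrite ca cb => /(_ erefl erefl) []; first (by rewrite -e); move=> /(_ e) h _.
have /crt_ends := crt_map step2 h.
case=> [->|[ta tb _ _ [aa ab]]] //.
have pa : 0 < tau a by apply/(lab_pos Htau ta); rewrite ?ca.
have pb : 0 < tau b by apply/(lab_pos Htau tb); rewrite ?cb.
have := lab_eq Htau ta tb (_ : cdim a < 3) (_ : cdim b = cdim a) pa pb.
rewrite ca cb => /(_ erefl erefl) [_]; apply; exact: crt_map step2 h.
Qed.

Lemma Q2 a b : cdim a = 2 -> cdim b = 2 -> in_box B a -> in_box B b ->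
  cconnected n1 n2 n3 a b -> tau a = tau b -> 0 < tau a -> lam a = lam b.
Proof.
move=> ca cb ha hb cc e p.
have [ta tb] := cconn_T cc.
have pb : 0 < tau b by rewrite -e.
have := lab_eq Htau ta tb (_ : cdim a < 3) (_ : cdim b = cdim a) p pb.
rewrite ca cb => /(_ erefl erefl) [/(_ e) h _].
have st := crt_same_theta h.
have aa : active n1 n2 n3 TB tau a by apply/(lab_pos Htau ta); rewrite ?ca.
have ab : active n1 n2 n3 TB tau b by apply/(lab_pos Htau tb); rewrite ?cb.
have pla : 0 < lam a by rewrite R2.
have plb : 0 < lam b by rewrite R2.
have := lab_eq Hlam ha hb (_ : cdim a < 3) (_ : cdim b = cdim a) pla plb.
rewrite ca cb => /(_ erefl erefl) [_]; apply; apply: rt_step.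
apply: step2' => //; exact: (conj ta (conj tb (conj ca (conj cb (conj aa (conj ab (conj st cc))))))).
Qed.


Lemma Gam_cdim s u : Gam s u -> cdim u = (cdim s).+1.
Proof. by case. Qed.

Lemma Gam_T s u : Gam s u -> inT u.
Proof. by case. Qed.

Lemma L1a s l : cdim s = 1 -> in_box B s -> inT s ->
  theta n1 n2 n3 TB tau s l ->
  exists u, [/\ Gam s u, tau u = l & theta n1 n2 n3 B lam s (lam u)].
Proof.
move=> cs hbs hTs [lp [u [hu _ hl hun]]].
have cu : cdim u = 2 by rewrite (Gam_cdim hu) cs.
have hbu := box_closed HB hbs hu.
exists u; split=> //; split; first by rewrite (R2 cu hbu (Gam_T hu)) hl.
exists u; split=> // u' hu' hbu' e.
have cu' : cdim u' = 2 by rewrite (Gam_cdim hu') cs.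
apply: hun => //; first exact: Gam_T hu'.
rewrite -hl; apply: P2 => //; rewrite e; by rewrite (R2 cu hbu (Gam_T hu)) hl.
Qed.

Lemma L1b s l : cdim s = 1 -> in_box B s -> inT s ->
  theta n1 n2 n3 B lam s l ->
  exists u, [/\ Gam s u, lam u = l & theta n1 n2 n3 TB tau s (tau u)].
Proof.
move=> cs hbs hTs [lp [u [hu hbu hl hun]]].
have cu : cdim u = 2 by rewrite (Gam_cdim hu) cs.
have pu : 0 < tau u by rewrite -(R2 cu hbu (Gam_T hu)) hl.
exists u; split=> //; split=> //.
exists u; split=> //; first exact: Gam_T hu.
move=> u' hu' _ e.
have cu' : cdim u' = 2 by rewrite (Gam_cdim hu') cs.
have hbu' := box_closed HB hbs hu'.
apply: hun => //; rewrite -hl; apply: Q2 => //; last by rewrite e.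
by exists s.
Qed.

Lemma act1 s : cdim s = 1 -> in_box B s -> inT s ->
  active n1 n2 n3 B lam s <-> active n1 n2 n3 TB tau s.
Proof.
move=> cs hbs hTs; split=> -[l hl].
- by have [u [_ _ h]] := L1b cs hbs hTs hl; exists (tau u).
- by have [u [_ _ h]] := L1a cs hbs hTs hl; exists (lam u).
Qed.

Lemma step1 a b : class_step n1 n2 n3 B lam 1 a b -> class_step n1 n2 n3 TB tau 1 a b.
Proof.
case=> ha [hb [ca [cb [aa [ab [st cc]]]]]].
have [ta tb] := cconn_T cc.
refine (conj ta (conj tb (conj ca (conj cb (conj _ (conj _ (conj _ cc))))))).
- by rewrite -act1.
- by rewrite -act1.
have side x y : in_box B x -> in_box B y -> inT x -> inT y -> cdim x = 1 -> cdim y = 1 ->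
   (forall l, theta n1 n2 n3 B lam x l <-> theta n1 n2 n3 B lam y l) ->
   forall l, theta n1 n2 n3 TB tau x l -> theta n1 n2 n3 TB tau y l.
  move=> hx hy tx ty cx cy sxy l hl.
  have [u [hu <- hlu]] := L1a cx hx tx hl.
  have [u' [hu' e hlu']] := L1b cy hy ty (proj1 (sxy _) hlu).
  have cu : cdim u = 2 by rewrite (Gam_cdim hu) cx.
  have cu' : cdim u' = 2 by rewrite (Gam_cdim hu') cy.
  rewrite -(@P2 u' u) //; [exact: box_closed hu'|exact: box_closed hu|].
  by rewrite e; case: hlu.
move=> l; split; first exact: side.
apply: side => // l'; by rewrite st.
Qed.

Lemma R1 s : cdim s = 1 -> in_box B s -> inT s -> (0 < lam s <-> 0 < tau s).
Proof.
move=> hc hb hT.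
rewrite (lab_pos Hlam hb) ?hc // (lab_pos Htau hT) ?hc //; exact: act1.
Qed.

Lemma P1 a b : cdim a = 1 -> cdim b = 1 -> in_box B a -> in_box B b ->
  lam a = lam b -> 0 < lam a -> tau a = tau b.
Proof.
move=> ca cb ha hb e p.
have := (lab_eq Hlam ha hb (_ : cdim a < 3) (_ : cdim b = cdim a) p (_ : 0 < lam b)).
rewrite ca cb => /(_ erefl erefl) []; first (by rewrite -e); move=> /(_ e) h _.
have /crt_ends := crt_map step1 h.
case=> [->|[ta tb _ _ [aa ab]]] //.
have pa : 0 < tau a by apply/(lab_pos Htau ta); rewrite ?ca.
have pb : 0 < tau b by apply/(lab_pos Htau tb); rewrite ?cb.
have := lab_eq Htau ta tb (_ : cdim a < 3) (_ : cdim b = cdim a) pa pb.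
rewrite ca cb => /(_ erefl erefl) [_]; apply; exact: crt_map step1 h.
Qed.

Lemma R0 t : cdim t = 0 -> in_box B t -> inT t -> 0 < tau t -> 0 < lam t.
Proof.
move=> ct hbt hTt /(lab_pos Htau hTt) [|l [lp [s [hs _ hl hun]]]]; first by rewrite ct.
apply/(lab_pos Hlam hbt); first by rewrite ct.
have cs : cdim s = 1 by rewrite (Gam_cdim hs) ct.
have hbs := box_closed HB hbt hs.
have ps : 0 < lam s by rewrite (R1 cs hbs (Gam_T hs)) hl.
exists (lam s); split=> //; exists s; split=> // s' hs' hbs' e.
have cs' : cdim s' = 1 by rewrite (Gam_cdim hs') ct.
apply: hun => //; first exact: Gam_T hs'.
rewrite -hl; apply: P1 => //; by rewrite e.
Qed.

End Blk.

Lemma upd_comm j k s a b : j < 3 -> k < 3 -> j != k ->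
  upd j (upd k s b) a = upd k (upd j s a) b.
Proof.
move=> hj hk ne; apply: cell_ext => i hi; rewrite !get_upd //.
case: (eqVneq i j) => [eij|nij]; case: (eqVneq i k) => [eik|nik] //.
by subst; rewrite eqxx in ne.
Qed.

Lemma get_upd_same i t v : i < 3 -> get i (upd i t v) = v.
Proof. by move=> hi; rewrite get_upd // eqxx. Qed.

Lemma frame s : cdim s = 1 -> exists j k, [/\ j < 3, k < 3, j != k, ~~ odd (get j s) &
  ~~ odd (get k s)] /\ forall i, i < 3 -> i != j -> i != k -> odd (get i s).
Proof.
rewrite cdimE.
case e0: (odd (get 0 s)); case e1: (odd (get 1 s)); case e2: (odd (get 2 s)) => //= _.
- exists 1, 2; rewrite e1 e2; split=> // -[|[|[|]]] //.
- exists 0, 2; rewrite e0 e2; split=> // -[|[|[|]]] //.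
- exists 0, 1; rewrite e0 e1; split=> // -[|[|[|]]] //.
Qed.

Lemma two_even u i i' : i < 3 -> i' < 3 -> i != i' -> ~~ odd (get i u) -> ~~ odd (get i' u) ->
  cdim u <= 1.
Proof.
rewrite cdimE; case: i => [|[|[|]]] //; case: i' => [|[|[|]]] // _ _ _ /negbTE -> /negbTE ->;
  by case: odd.
Qed.

Lemma neqS x : x.+1 <> x.
Proof. by elim: x => // x IH [/IH]. Qed.

Lemma neqP x : 0 < x -> x.-1 <> x.
Proof. by case: x => // x _ /= e; apply: (neqS (esym e)). Qed.

Ltac contra_nat :=
  match goal with
  | H : ?x.+1 = ?x |- _ => exfalso; exact: (neqS H)
  | H : ?x = ?x.+1 |- _ => exfalso; exact: (neqS (esym H))
  | H : ?x.+1 = ?x.-1 |- _ => exfalso; apply: (succ_pred _ H); assumption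
  | H : ?x.-1 = ?x.+1 |- _ => exfalso; apply: (succ_pred _ (esym H)); assumption
  | H : ?x.-1 = ?x |- _ => exfalso; apply: (neqP _ H); assumption
  | H : ?x = ?x.-1 |- _ => exfalso; apply: (neqP _ (esym H)); assumption
  end.

Section Nr.
Variables (n1 n2 n3 : nat) (sigma tau : cell -> nat) (mT : nat -> nat).
Hypothesis Hseg : segment_label_map n1 n2 n3 sigma.
Hypothesis Htau : LABEL_spec n1 n2 n3 sigma (Tbox n1 n2 n3) tau mT.

Local Notation Gam := (Gamma n1 n2 n3).
Local Notation inT := (in_T n1 n2 n3).
Local Notation TB := (Tbox n1 n2 n3).

Lemma inT_get t i : inT t -> i < 3 -> 0 < get i t.
Proof.
move=> /in_box_get H hi; have /andP[h _] := H i hi.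
have e : get i TB.1 = 1 by case: i hi {h H} => [|[|[|]]].
by rewrite e in h.
Qed.

Lemma halfP x n : odd x -> 1 <= x -> x <= (2 * n).-1 -> 1 <= x.+1./2 <= n.
Proof.
move=> ox h1 h2; have e := oddE x; rewrite ox /= in e.
move: h2; rewrite e !mul2n add1n; move: (x./2) => h.
rewrite -doubleS doubleK /=.
case: n => [|n]; first by [].
by rewrite doubleS /= ltnS leq_double.
Qed.

Lemma vox_pos v : inT v -> cdim v = 3 -> 0 < tau v.
Proof.
move=> hT hc; rewrite (proj1 Htau v hT hc); apply: (proj1 Hseg).
have : [/\ odd (get 0 v), odd (get 1 v) & odd (get 2 v)].
  by move: hc; rewrite cdimE; case: odd; case: odd; case: odd.
move: hT => /in_box_get H [o0 o1 o2].
have := H 0 erefl; have := H 1 erefl; have := H 2 erefl.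
rewrite /in_G /voxel_of /get /cx /cy /cz /= in o0 o1 o2 * => /andP [a1 a2] /andP [b1 b2] /andP [c1 c2].
by rewrite !halfP.
Qed.

Lemma Gam2 u k' v : cdim u = 2 -> inT u -> k' < 3 -> ~~ odd (get k' u) ->
  (Gam u v <-> v = upd k' u (get k' u).+1 \/ v = upd k' u (get k' u).-1).
Proof.
move=> cu hT hk hev; split.
- move=> /GammaE [_ [i [hi hevi hs]]].
  case: (eqVneq i k') => [e|ne]; last first.
    by have := two_even hi hk ne hevi hev; rewrite cu.
  subst i; case: hs => [->|[_ ->]]; by [left|right].
- by apply: GammaI.
Qed.

Lemma theta_two u v1 v2 l : v1 <> v2 -> (forall v, Gam u v <-> v = v1 \/ v = v2) ->
  (theta n1 n2 n3 TB tau u l <-> PT (tau v1) (tau v2) l).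
Proof.
move=> ne H; rewrite /PT; split.
- move=> [lp [v [hv _ hl hun]]]; split=> //.
  have g1 : Gam u v1 by apply/H; left.
  have g2 : Gam u v2 by apply/H; right.
  case/H: hv => ev; subst v.
  + left; split=> // e; apply: ne; symmetry; apply: hun => //; exact: Gam_T g2.
  + right; split=> // e; apply: ne; apply: hun => //; exact: Gam_T g1.
- have g1 : Gam u v1 by apply/H; left.
  have g2 : Gam u v2 by apply/H; right.
  move=> [lp [[e1 n2']|[e2 n1']]]; split=> //.
  + exists v1; split=> //; first exact: Gam_T g1.
    by move=> v' /H [->|->] // _ e.
  + exists v2; split=> //; first exact: Gam_T g2.
    by move=> v' /H [->|->] // _ e.
Qed.


Lemma PT_ne a b l : PT a b l -> a <> b.
Proof. by rewrite /PT => -[_ [[-> h]|[-> h]]] e; apply: h. Qed.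

Lemma NR s u u' : cdim s = 1 -> inT s -> active n1 n2 n3 TB tau s ->
  Gam s u -> Gam s u' -> 0 < tau u -> tau u' = tau u -> u' = u.
Proof.
move=> cs hTs hact hu hu' pu e.
have [j [k [[hj hk njk ej ek] hodd]]] := frame cs.
set sj := get j s in ej *; set sk := get k s in ek *.
have pj : 0 < sj := inT_get hTs hj.
have pk : 0 < sk := inT_get hTs hk.
have nkj : k != j by rewrite eq_sym.
have gjj a : get j (upd j s a) = a by rewrite get_upd_same.
have gkk a : get k (upd k s a) = a by rewrite get_upd_same.
have gkj a : get k (upd j s a) = sk by rewrite get_upd // (negbTE nkj).
have gjk a : get j (upd k s a) = sj by rewrite get_upd // (negbTE njk).
pose E i := if i == 0 then upd j s sj.+1 else if i == 1 then upd k s sk.+1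
            else if i == 2 then upd j s sj.-1 else upd k s sk.-1.
pose V a b := upd k (upd j s a) b.
pose A := tau (V sj.+1 sk.+1); pose B := tau (V sj.-1 sk.+1);
pose C := tau (V sj.-1 sk.-1); pose D := tau (V sj.+1 sk.-1).
have F2 i : i < 4 -> Gam s (E i).
  case: i => [|[|[|[|]]]] // _; rewrite /E /=.
  - by apply: (GammaI hTs hj ej); left.
  - by apply: (GammaI hTs hk ek); left.
  - by apply: (GammaI hTs hj ej); right.
  - by apply: (GammaI hTs hk ek); right.
have F1 w : Gam s w -> exists2 i, i < 4 & w = E i.
  move=> /GammaE [_ [i0 [hi0 hev hs]]].
  case: (eqVneq i0 j) => [e0|n0]; first (subst i0; case: hs => [->|[_ ->]]; by [exists 0|exists 2]).
  case: (eqVneq i0 k) => [e0|n0']; first (subst i0; case: hs => [->|[_ ->]]; by [exists 1|exists 3]).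
  by rewrite (hodd i0 hi0 n0 n0') in hev.
have F3 i i' : i < 4 -> i' < 4 -> E i = E i' -> i = i'.
  case: i => [|[|[|[|]]]] //; case: i' => [|[|[|[|]]]] // _ _; rewrite /E /= => h;
  have := congr1 (get j) h; have := congr1 (get k) h; rewrite ?gjj ?gkj ?gjk ?gkk => A1 A2;
  first [done | contra_nat].
have F4gen w b : Gam s w -> b < 3 -> ~~ odd (get b w) -> forall l,
    theta n1 n2 n3 TB tau w l <-> PT (tau (upd b w (get b w).+1)) (tau (upd b w (get b w).-1)) l.
  move=> hw hb hev l; have cw : cdim w = 2 by rewrite (Gam_cdim hw) cs.
  have hTw := Gam_T hw.
  have pb := inT_get hTw hb.
  apply: theta_two.
    by move/(congr1 (get b)); rewrite !get_upd_same // => H; exact: (succ_pred pb H).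
  by move=> v; apply: Gam2.
have F4 i : i < 4 -> forall l, theta n1 n2 n3 TB tau (E i) l <-> PT (PAf A B C D i) (PBf A B C D i) l.
  case: i => [|[|[|[|]]]] // _ l.
  - by have := F4gen _ _ (F2 0 erefl) hk; rewrite /E /= gkj => /(_ ek l).
  - by have := F4gen _ _ (F2 1 erefl) hj; rewrite /E /= gjk => /(_ ej l);
      rewrite 2!(upd_comm s _ _ hj hk njk).
  - by have := F4gen _ _ (F2 2 erefl) hk; rewrite /E /= gkj => /(_ ek l).
  - by have := F4gen _ _ (F2 3 erefl) hj; rewrite /E /= gjk => /(_ ej l);
      rewrite 2!(upd_comm s _ _ hj hk njk).
have G5 w b : Gam s w -> b < 3 -> ~~ odd (get b w) ->
    0 < tau (upd b w (get b w).+1) /\ 0 < tau (upd b w (get b w).-1).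
  move=> hw hb hev; have cw : cdim w = 2 by rewrite (Gam_cdim hw) cs.
  have hTw := Gam_T hw.
  have g1 : Gam w (upd b w (get b w).+1) by apply: (GammaI hTw hb hev); left.
  have g2 : Gam w (upd b w (get b w).-1) by apply: (GammaI hTw hb hev); right.
  split; apply: vox_pos; rewrite ?(Gam_T g1) ?(Gam_T g2) //.
  - by rewrite (Gam_cdim g1) cw.
  - by rewrite (Gam_cdim g2) cw.
have [pA pD] : 0 < A /\ 0 < D.
  by have := G5 _ _ (F2 0 erefl) hk; rewrite /E /= gkj => /(_ ek).
have [pB pC] : 0 < B /\ 0 < C.
  by have := G5 _ _ (F2 2 erefl) hk; rewrite /E /= gkj => /(_ ek).
have pP i : 0 < PAf A B C D i /\ 0 < PBf A B C D i.
  rewrite /PAf /PBf; case: ifP => _; [by []|case: ifP => _; [by []|case: ifP => _ //]].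
case: (eqVneq u' u) => // ne.
case: hact => l0 [lp [w [hw _ hlw hunw]]].
have [i hi Ei] := F1 u hu; have [i' hi' Ei'] := F1 u' hu'; have [i0 hi0 Ei0] := F1 w hw.
have cu : cdim u = 2 by rewrite (Gam_cdim hu) cs.
have cu' : cdim u' = 2 by rewrite (Gam_cdim hu') cs.
have cw : cdim w = 2 by rewrite (Gam_cdim hw) cs.
have hTu := Gam_T hu; have hTu' := Gam_T hu'; have hTw := Gam_T hw.
have pu' : 0 < tau u' by rewrite e.
have st : same_theta n1 n2 n3 TB tau u u'.
  have := lab_eq Htau hTu hTu' (_ : cdim u < 3) (_ : cdim u' = cdim u) pu pu'.
  rewrite cu cu' => /(_ erefl erefl) [h _]; exact: crt_same_theta (h (esym e)).
have au : active n1 n2 n3 TB tau u by apply/(lab_pos Htau hTu); rewrite ?cu.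
have aw : active n1 n2 n3 TB tau w.
  by apply/(lab_pos Htau hTw); rewrite ?cw // hlw.
have Sii : SS (PAf A B C D i) (PBf A B C D i) (PAf A B C D i') (PBf A B C D i').
  have [a1 b1] := pP i; have [a2 b2] := pP i'.
  apply: ptS => //.
    by move=> l; rewrite -F4 // -F4 // -Ei -Ei'; exact: st.
  case: au => l hl; apply: (@PT_ne _ _ l); apply/F4 => //; by rewrite -Ei.
have nii : i <> i' by move=> ii; move/eqP: ne; apply; rewrite Ei Ei' ii.
have nw : PAf A B C D i0 <> PBf A B C D i0.
  case: aw => l hl; apply: (@PT_ne _ _ l); apply/F4 => //; by rewrite -Ei0.
have [i1 hi1 [ne1 S01]] := cyc4 hi hi' hi0 nii Sii nw.
have st01 : same_theta n1 n2 n3 TB tau (E i0) (E i1).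
  by move=> l; rewrite F4 // F4 //; apply: Sptt.
have a0 : active n1 n2 n3 TB tau (E i0) by rewrite -Ei0.
have a1 : active n1 n2 n3 TB tau (E i1) by case: a0 => l /st01 hl; exists l.
have c0 : cdim (E i0) = 2 by rewrite -Ei0.
have c1 : cdim (E i1) = 2 by rewrite (Gam_cdim (F2 i1 hi1)) cs.
have t0 := Gam_T (F2 i0 hi0); have t1 := Gam_T (F2 i1 hi1).
have cs01 : class_step n1 n2 n3 TB tau 2 (E i0) (E i1).
  refine (conj t0 (conj t1 (conj c0 (conj c1 (conj a0 (conj a1 (conj st01 _))))))).
  by exists s; split=> //; apply: F2.
have q0 : 0 < tau (E i0) by apply/(lab_pos Htau t0); rewrite ?c0.
have q1 : 0 < tau (E i1) by apply/(lab_pos Htau t1); rewrite ?c1.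
have := lab_eq Htau t0 t1 (_ : cdim (E i0) < 3) (_ : cdim (E i1) = cdim (E i0)) q0 q1.
rewrite c0 c1 => /(_ erefl erefl) [_ /(_ (rt_step _ _ _ _ cs01)) et].
apply: False_ind; apply: ne1; apply: F3 => //.
rewrite -Ei0; apply: hunw; [exact: F2|exact: t1|by rewrite -et -Ei0].
Qed.

End Nr.

Lemma sum_mono (f : nat -> nat) a b : a <= b -> \sum_(0 <= i < a) f i <= \sum_(0 <= i < b) f i.
Proof.
move=> /subnK <-; elim: (b - a) => [|d IH]; first by rewrite add0n.
by rewrite addSn big_nat_recr //=; apply: leq_trans IH _; apply: leq_addr.
Qed.

Lemma off_inj (f : nat -> nat) k k' x x' : 0 < x <= f k -> 0 < x' <= f k' ->
  \sum_(0 <= i < k) f i + x = \sum_(0 <= i < k') f i + x' -> k = k'.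
Proof.
move=> hx hx' e.
have gen p q y y' : 0 < y <= f p -> 0 < y' -> p < q ->
    \sum_(0 <= i < p) f i + y < \sum_(0 <= i < q) f i + y'.
  move=> /andP [_ hy] hy' pq.
  have := sum_mono f pq; rewrite big_nat_recr //= => h.
  have h1 : \sum_(0 <= i < p) f i + y <= \sum_(0 <= i < q) f i.
    by apply: leq_trans h; rewrite leq_add2l.
  by rewrite (leq_ltn_trans h1) // -{1}(addn0 (\sum_(0 <= i < q) f i)) ltn_add2l.
case: (ltngtP k k') => // h.
- by have := gen _ _ _ _ hx (proj1 (andP hx')) h; rewrite e ltnn.
- by have := gen _ _ _ _ hx' (proj1 (andP hx)) h; rewrite e ltnn.
Qed.

Section Fin.
Variables (n1 n2 n3 : nat) (sigma tau : cell -> nat) (mT : nat -> nat) (a1 a2 a3 : seq nat).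
Hypothesis Hseg : segment_label_map n1 n2 n3 sigma.
Hypothesis Hv1 : valid_breaks n1 a1.
Hypothesis Hv2 : valid_breaks n2 a2.
Hypothesis Hv3 : valid_breaks n3 a3.
Hypothesis Htau : LABEL_spec n1 n2 n3 sigma (Tbox n1 n2 n3) tau mT.
Variables (bl : seq box) (lams : nat -> cell -> nat) (ms : nat -> nat -> nat)
          (rep : nat -> nat -> nat) (blk : cell -> nat).

Local Notation Gam := (Gamma n1 n2 n3).
Local Notation inT := (in_T n1 n2 n3).
Local Notation TB := (Tbox n1 n2 n3).
Local Notation K := (size bl).
Local Notation off k j := (\sum_(0 <= i < k) ms i j).
Local Notation L k t := (if 0 < lams k t then off k (cdim t) + lams k t else 0).
Local Notation unite j := (fun a b => exists t k k',
      cdim t = j /\ k < K /\ k' < K /\ in_box (nth box0 bl k) t /\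
      in_box (nth box0 bl k') t /\ 0 < lams k t /\ 0 < lams k' t /\
      a = L k t /\ b = L k' t).
Local Notation Erel j := (clos_refl_sym_trans nat (unite j)).
Local Notation c3 := (fun t => let v := L (blk t) t in
              if (cdim t == 1) || (cdim t == 2) then
                (if v == 0 then 0 else rep (cdim t) v) else v).

Hypothesis Hperm : perm_eq bl (blocks a1 a2 a3).
Hypothesis Hlab : forall k, k < K -> LABEL_spec n1 n2 n3 sigma (nth box0 bl k) (lams k) (ms k).
Hypothesis Hrep : forall j l, (j == 1) || (j == 2) -> 0 < l ->
         Erel j l (rep j l) /\ forall l', 0 < l' -> Erel j l l' -> rep j l = rep j l'.
Hypothesis Hblk : forall t, inT t -> cdim t < 3 -> blk t < K /\ in_box (nth box0 bl (blk t)) t.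

Lemma Bodd k : k < K -> odd_box (nth box0 bl k).
Proof.
move=> hk; have := mem_nth box0 hk; rewrite (perm_mem Hperm).
case: Hv1 => _ _ _ o1; case: Hv2 => _ _ _ o2; case: Hv3 => _ _ _ o3.
exact: blocks_odd.
Qed.

Definition glob j a g := exists t k, [/\ cdim t = j, k < K, in_box (nth box0 bl k) t,
   0 < lams k t & a = L k t /\ tau t = g].

Lemma lam_le k t : k < K -> in_box (nth box0 bl k) t -> cdim t < 3 -> 0 < lams k t ->
  lams k t <= ms k (cdim t).
Proof.
move=> hk hb hc p; have hL := Hlab hk.
have [_ H] := hL; have [_ h1 _ _] := H _ hc.
by have /andP[] := h1 t hb erefl (proj1 (lab_pos hL hb hc) p).
Qed.

Lemma glob_cons j a g g' : (j = 1 \/ j = 2) -> glob j a g -> glob j a g' -> g = g'.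
Proof.
move=> hj [t [k [ct hk hb p [ea eg]]]] [t' [k' [ct' hk' hb' p' [ea' eg']]]].
rewrite p in ea; rewrite p' in ea'.
have c3j : j < 3 by case: hj => ->.
have ht : cdim t < 3 by rewrite ct.
have ht' : cdim t' < 3 by rewrite ct'.
have le1 := lam_le hk hb ht p; have le2 := lam_le hk' hb' ht' p'.
rewrite ct in le1 ea; rewrite ct' in le2 ea'.
have ekk : k = k'.
  apply: (@off_inj (fun i => ms i j) _ _ (lams k t) (lams k' t')).
  - by rewrite p le1 // ct.
  - by rewrite p' le2 // ct'.
  - by rewrite -ea -ea'.
subst k'.
have el : lams k t = lams k t' by move: ea'; rewrite ea => /addnI.
rewrite -eg -eg'.
case: hj => ej; rewrite ej in ct ct'.
- exact: (P1 Htau (Hlab hk) (Bodd hk) ct ct' hb hb' el p).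
- exact: (P2 Htau (Hlab hk) (Bodd hk) ct ct' hb hb' el p).
Qed.

Definition GE j a b := forall g, glob j a g <-> glob j b g.

Lemma Erel_GE j a b : (j = 1 \/ j = 2) -> Erel j a b -> GE j a b.
Proof.
move=> hj; elim=> [x y [t [k [k' [ct [hk [hk' [hb [hb' [p [p' [ex ey]]]]]]]]]]]|x|x y _ h|x y z _ h1 _ h2] g.
- have gx : glob j x (tau t) by exists t, k; split.
  have gy : glob j y (tau t) by exists t, k'; split.
  split=> h.
  + by rewrite (glob_cons hj h gx).
  + by rewrite (glob_cons hj h gy).
- by [].
- by rewrite h.
- by rewrite h1 h2.
Qed.

Lemma glob0 j g : ~ glob j 0 g.
Proof.
move=> [t [k [_ _ _ p [e _]]]]; move: e; rewrite p => /esym/eqP; rewrite addn_eq0 => /andP [_ /eqP z].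
by rewrite z in p.
Qed.

Lemma c3_spec t j : inT t -> cdim t = j -> (j = 1 \/ j = 2) ->
  (0 < c3 t <-> 0 < tau t) /\ (0 < c3 t -> forall g, glob j (c3 t) g <-> g = tau t).
Proof.
move=> hT ct hj.
have hc : cdim t < 3 by rewrite ct; case: hj => ->.
have [hk hb] := Hblk hT hc.
set k := blk t in hk hb *.
have Rj : 0 < lams k t <-> 0 < tau t.
  case: hj => ej; rewrite ej in ct.
  - exact: (R1 Htau (Hlab hk) (Bodd hk) ct hb hT).
  - exact: (R2 Htau (Hlab hk) (Bodd hk) ct hb hT).
have jb : (cdim t == 1) || (cdim t == 2) by rewrite ct; case: hj => ->.
rewrite /= jb.
case: (posnP (lams k t)) => [z|p].
  by move: Rj; rewrite z /= => Rj; split.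
have Lp : 0 < off k (cdim t) + lams k t by rewrite addn_gt0 p orbT.
rewrite (negbTE (lt0n_neq0 Lp)) ct.
have hj' : (j == 1) || (j == 2) by case: hj => ->.
have [hE _] := Hrep hj' Lp.
have G := Erel_GE hj hE.
have gl : glob j (off k (cdim t) + lams k t) (tau t) by exists t, k; split => //; rewrite p.
have gr : glob j (rep j (off k (cdim t) + lams k t)) (tau t) by apply/G.
have rp : 0 < rep j (off k (cdim t) + lams k t).
  by rewrite lt0n; apply/eqP => e; rewrite e in gr; exact: glob0 gr.
rewrite ct in G gl rp.
split; first by split=> _; [exact/Rj|exact: rp].
move=> _ g; rewrite -G; split; last by move->.
by move=> h; exact: glob_cons hj h gl.
Qed.


Lemma c3_0 t : inT t -> cdim t = 0 -> 0 < tau t -> 0 < c3 t.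
Proof.
move=> hT ct pt.
have hc : cdim t < 3 by rewrite ct.
have [hk hb] := Hblk hT hc.
have p := R0 Htau (Hlab hk) (Bodd hk) ct hb hT pt.
by rewrite /= ct /= p addn_gt0 p orbT.
Qed.

Definition Inv (E : nat -> nat -> Prop) := forall a b, E a b -> GE 1 a b.

Lemma key x : inT x -> cdim x = 1 -> 0 < c3 x -> forall l,
  theta n1 n2 n3 TB tau x l <-> exists m, bound2 n1 n2 n3 c3 x m /\ glob 2 m l.
Proof.
move=> hTx cx px l.
have [[S1 S2] _] := c3_spec hTx cx (or_introl erefl).
have tx := S1 px.
have ax : active n1 n2 n3 TB tau x by apply/(lab_pos Htau hTx); rewrite ?cx.
split.
- move=> [lp [u [hu _ hl hun]]].
  have cu : cdim u = 2 by rewrite (Gam_cdim hu) cx.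
  have hTu := Gam_T hu.
  have [[U1 U2] U3] := c3_spec hTu cu (or_intror erefl).
  have pcu : 0 < c3 u by apply: U2; rewrite hl.
  exists (c3 u); split; first by exists u; split.
  by apply/(U3 pcu).
- move=> [m [[u [hu pu em]] gm]].
  have cu : cdim u = 2 by rewrite (Gam_cdim hu) cx.
  have hTu := Gam_T hu.
  have [[U1 U2] U3] := c3_spec hTu cu (or_intror erefl).
  have el : l = tau u by apply/(U3 pu); rewrite em.
  have ptu := U1 pu.
  split; first by rewrite el.
  exists u; split; [exact: hu|exact: hTu|by rewrite el|].
  move=> u' hu' _ e'; apply: (NR Hseg Htau cx hTx ax hu hu' ptu); by rewrite e' el.
Qed.

Lemma MP E t0 a b : inT t0 -> cdim t0 = 0 -> mergepair n1 n2 n3 c3 E t0 a b -> GE 1 a b.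
Proof.
move=> hT ct [s [s' [[hs ps _] [[hs' ps' _] [_ [ea [eb hb]]]]]]].
have cs : cdim s = 1 by rewrite (Gam_cdim hs) ct.
have cs' : cdim s' = 1 by rewrite (Gam_cdim hs') ct.
have hTs := Gam_T hs; have hTs' := Gam_T hs'.
have [[S1 _] S3] := c3_spec hTs cs (or_introl erefl).
have [[S1' _] S3'] := c3_spec hTs' cs' (or_introl erefl).
have ts := S1 ps; have ts' := S1' ps'.
have as1 : active n1 n2 n3 TB tau s by apply/(lab_pos Htau hTs); rewrite ?cs.
have as2 : active n1 n2 n3 TB tau s' by apply/(lab_pos Htau hTs'); rewrite ?cs'.
have st : same_theta n1 n2 n3 TB tau s s'.
  move=> l; rewrite (key hTs cs ps) (key hTs' cs' ps').
  by split=> -[m [h1 h2]]; exists m; split=> //; apply/hb.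
have cst : class_step n1 n2 n3 TB tau 1 s s'.
  refine (conj hTs (conj hTs' (conj cs (conj cs' (conj as1 (conj as2 (conj st _))))))).
  by exists t0; split.
have := lab_eq Htau hTs hTs' (_ : cdim s < 3) (_ : cdim s' = cdim s) ts ts'.
rewrite cs cs' => /(_ erefl erefl) [_ /(_ (rt_step _ _ _ _ cst)) e].
move=> g; rewrite ea eb (S3 ps g) (S3' ps' g) e //.
Qed.

Lemma Enext_inv E t0 : Inv E -> inT t0 -> cdim t0 = 0 -> Inv (Enext n1 n2 n3 c3 E t0).
Proof.
move=> hI hT ct a b; elim=> [x y [h|h]|x|x y _ h|x y z _ h1 _ h2] g.
- exact: hI.
- exact: MP hT ct h g.
- by [].
- by rewrite h.
- by rewrite h1 h2.
Qed.

Lemma act0 E t0 : Inv E -> inT t0 -> cdim t0 = 0 -> 0 < tau t0 -> active0 n1 n2 n3 c3 E t0.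
Proof.
move=> hI hT ct pt.
have [|l [lp [s [hs _ hl hun]]]] := proj1 (lab_pos Htau hT (_ : cdim t0 < 3)) pt; first by rewrite ct.
have cs : cdim s = 1 by rewrite (Gam_cdim hs) ct.
have hTs := Gam_T hs.
have [[S1 S2] S3] := c3_spec hTs cs (or_introl erefl).
have ps : 0 < c3 s by apply: S2; rewrite hl.
exists s; split=> // s' hs' ps' he.
have cs' : cdim s' = 1 by rewrite (Gam_cdim hs') ct.
have hTs' := Gam_T hs'.
have [_ S3'] := c3_spec hTs' cs' (or_introl erefl).
have g1 : glob 1 (c3 s) (tau s) by apply/(S3 ps).
have /(S3' ps') e := proj1 (hI _ _ he _) g1.
apply: hun => //; by rewrite -e.
Qed.

Lemma step4_notin E lab ord lab' t : step4 n1 n2 n3 c3 E lab ord lab' -> t \notin ord -> lab' t = lab t.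
Proof.
elim=> {E lab ord lab'} [//|E lab t0 ord v lab' _ _ _ _ IH].
rewrite in_cons negb_or => /andP [nt nord].
by rewrite IH // (negbTE nt).
Qed.

Lemma step4_main E lab ord lab' : step4 n1 n2 n3 c3 E lab ord lab' -> Inv E -> uniq ord ->
  (forall x, x \in ord -> inT x /\ cdim x = 0) ->
  forall t, t \in ord -> 0 < tau t -> lab' t = lab t.
Proof.
elim=> {E lab ord lab'} [//|E lab t0 ord v lab' h1 h2 h3 hs IH] hI /andP [nt0 hu] hord t ht pt.
have [hT0 ct0] := hord t0 (mem_head _ _).
have hI' := Enext_inv hI hT0 ct0.
have hord' x : x \in ord -> inT x /\ cdim x = 0 by move=> hx; apply: hord; rewrite in_cons hx orbT.
case: (eqVneq t t0) => [e|ne].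
- subst t0.
  have ev : v = lab t.
    case: (classic (merged n1 n2 n3 c3 E t)) => hm; last exact: h3.
    by apply: h1 => //; apply: act0.
  by rewrite (step4_notin hs nt0) eqxx ev.
- move: ht; rewrite in_cons (negbTE ne) /= => ht.
  by rewrite (IH hI' hu hord' t ht pt) (negbTE ne).
Qed.

End Fin.

Theorem proposition6 (n1 n2 n3 : nat) (sigma : cell -> nat)
    (a1 a2 a3 : seq nat) (tau : cell -> nat) (mT : nat -> nat)
    (tau' : cell -> nat) :
  segment_label_map n1 n2 n3 sigma ->
  valid_breaks n1 a1 -> valid_breaks n2 a2 -> valid_breaks n3 a3 ->
  LABEL_spec n1 n2 n3 sigma (Tbox n1 n2 n3) tau mT ->
  blockwise_output n1 n2 n3 sigma a1 a2 a3 tau' ->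
  forall t, in_T n1 n2 n3 t -> cdim t = 0 -> tau t <> 0 -> tau' t <> 0.
Proof.
move=> Hseg Hv1 Hv2 Hv3 Htau [bl [lams [ms [rep [blk [ord H]]]]]] t hT ct ht.
cbv zeta in H.
case: H => [Hperm [Hlab [Hrep [Hblk [Huniq [Hord Hstep]]]]]].
have pt : 0 < tau t by rewrite lt0n; apply/eqP.
have ht' : t \in ord by rewrite Hord hT ct.
have hord x : x \in ord -> in_T n1 n2 n3 x /\ cdim x = 0.
  by rewrite Hord => /andP [? /eqP ?].
rewrite (step4_main Hseg Hv1 Hv2 Hv3 Htau Hperm Hlab Hrep Hblk Hstep _ Huniq hord ht' pt);
  last by move=> a b ->.
have := c3_0 Hv1 Hv2 Hv3 Htau rep Hperm Hlab Hblk hT ct pt.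
by rewrite lt0n => /eqP.
Qed.
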